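(* Let $q$ be a prime power, $n$ a positive integer, $\sigma$ a sesquilinear form of $\mathbb F_{q^{2n}}/\mathbb F_{q^2}$, and $C$ a coefficient matrix of a reduced form of $\sigma$. Then $\sigma$ has a diagonal coefficient matrix whose nonzero entries are $d_1,\dots,d_r$ if and only if $\operatorname{rad}\sigma=\operatorname{rad}\sigma^*$ and $C^*C^{-1}$ is conjugate to the diagonal matrix with diagonal entries $d_1^{q-1},\dots,d_r^{q-1}$.
   Context: A sesquilinear form of $\mathbb F_{q^{2n}}/\mathbb F_{q^2}$ is a map $\sigma:\mathbb F_{q^{2n}}^2\to\mathbb F_{q^2}$ that is $\mathbb F_{q^2}$-linear in the first argument and additive with $\sigma(u,cv)=c^q\sigma(u,v)$ ($c\in\mathbb F_{q^2}$) in the second. $\sigma^*(u,v)=\sigma(v,u)^q$. $\operatorname{rad}\sigma=\{u:\sigma(u,v)=0\ \forall v\}$. If $W$ is an $\mathbb F_{q^2}$-subspace with $\mathbb F_{q^{2n}}=W\oplus(\operatorname{rad}\sigma\cap\operatorname{rad}\sigma^* )$, the restriction of $\sigma$ to $W\times W$ is a reduced form of $\sigma$. The coefficient matrix of a form w.r.t. a basis $\beta_1,\dots,\beta_k$ of its domain has $(i,j)$ entry $\sigma(\beta_i,\beta_j)$. For a matrix $M$, $M^*$ is the transpose of $M$ with every entry raised to the $q$-th power. *)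

(* Defs.v *)
From HB Require Import structures.
From mathcomp Require Import all_boot all_algebra all_field.
Set Implicit Arguments. Unset Strict Implicit. Unset Printing Implicit Defensive.
Import GRing.Theory.
Local Open Scope ring_scope.

Section Sesq.
Variables (F : finFieldType) (L : fieldExtType F).

Definition sesquilinear (q : nat) (s : L -> L -> F) : Prop :=
  [/\ forall (c : F) (u v w : L), s (c *: u + v) w = c * s u w + s v w,
      forall u v w : L, s u (v + w) = s u v + s u w
    & forall (c : F) (u v : L), s u (c *: v) = c ^+ q * s u v].

Definition sstar (q : nat) (s : L -> L -> F) : L -> L -> F :=
  fun u v => (s v u) ^+ q.

Definition srad (s : L -> L -> F) (u : L) : Prop := forall v, s u v = 0.

Definition reduced_domain (q : nat) (s : L -> L -> F) (W : {vspace L}) : Prop :=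
  (forall x : L, exists w y, [/\ w \in W, srad s y, srad (sstar q s) y & x = w + y])
  /\ (forall w : L, w \in W -> srad s w -> srad (sstar q s) w -> w = 0).

Definition coefmx (s : L -> L -> F) (k : nat) (b : k.-tuple L) : 'M[F]_k :=
  \matrix_(i, j) s (tnth b i) (tnth b j).

Definition has_diag_coefmx (s : L -> L -> F) (d : seq F) : Prop :=
  exists b : (\dim (fullv : {vspace L})).-tuple L,
    [/\ basis_of fullv b,
        forall i j, i != j -> coefmx s b i j = 0
      & perm_eq [seq coefmx s b i i | i <- enum 'I_(\dim (fullv : {vspace L}))
                                    & coefmx s b i i != 0] d].
End Sesq.

Definition mx_star (F : finFieldType) (q k : nat) (M : 'M[F]_k) : 'M[F]_k :=
  map_mx (fun x => x ^+ q) M^T.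

(* A is conjugate to B: A = P B P^{-1} with P invertible (sizes may a priori
   differ; invertibility of P forces them to agree) *)
Definition mx_conj (F : fieldType) (k r : nat) (A : 'M[F]_k) (B : 'M[F]_r) : Prop :=
  exists (P : 'M[F]_(k, r)) (Q : 'M[F]_(r, k)),
    [/\ P *m Q = 1%:M, Q *m P = 1%:M & A = P *m B *m Q].

(* Main.v *)
From HB Require Import structures.
From mathcomp Require Import all_boot all_algebra all_field all_solvable.
From mathcomp Require Import zify.
From Stdlib Require Import Classical_Prop.
Require Import Defs.
Set Implicit Arguments. Unset Strict Implicit. Unset Printing Implicit Defensive.
Import GRing.Theory.
Local Open Scope ring_scope.

Section FF.
Variables (F : finFieldType) (q : nat).
Hypothesis q1 : (1 < q)%N.
Hypothesis cardF : #|F| = (q ^ 2)%N.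

Lemma ffK (x : F) : x ^+ q ^+ q = x.
Proof. by rewrite -exprM -[(q * q)%N]/(q ^ 2)%N -cardF expf_card. Qed.

Let N := (q ^ 2).-1.

Lemma ff_prim : exists z : F, N.-primitive_root z.
Proof.
have N0 : (0 < N)%N by rewrite /N; nia.
have : has N.-primitive_root (enum (predC1 (0 : F))).
  apply: has_prim_root => //; last by rewrite -cardE cardC1 cardF.
    apply/allP => x; rewrite mem_enum /= => x0.
    rewrite unity_rootE; apply/eqP.
    apply: (mulfI x0); rewrite mulr1 -exprS prednK; last by nia.
    by rewrite -cardF expf_card.
  exact: enum_uniq.
by case/hasP => z _ pz; exists z.
Qed.

Lemma ff_norm (t : F) : t != 0 -> t ^+ (q - 1) = 1 -> exists c : F, c ^+ q * c = t.
Proof.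
move=> t0 tq; have [z pz] := ff_prim.
have tN : t ^+ N = 1.
  have -> : N = ((q - 1) * (q + 1))%N by rewrite /N; nia.
  by rewrite exprM tq expr1n.
have [i ti] := prim_rootP pz tN; rewrite {t t0 tN}ti in tq *.
move: tq; rewrite -exprM => /eqP; rewrite -(prim_order_dvd pz) => dv.
have : (q + 1 %| i)%N.
  have eN : N = ((q + 1) * (q - 1))%N by rewrite /N; nia.
  have : ((q + 1) * (q - 1) %| i * (q - 1))%N by rewrite -eN.
  by rewrite dvdn_pmul2r //; nia.
case/dvdnP => j ->; exists (z ^+ j).
by rewrite -exprSr -exprM; congr (_ ^+ _); lia.
Qed.

Lemma ff_nonfix : exists a : F, a ^+ q != a.
Proof.
have [z pz] := ff_prim; exists z; apply/negP => /eqP zq.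
have z0 : z != 0.
  apply/negP => /eqP z0; have := prim_expr_order pz; rewrite z0 expr0n.
  have -> : (N == 0%N) = false by apply/eqP; rewrite /N; nia.
  by move/eqP; rewrite eq_sym oner_eq0.
have : z ^+ (q - 1) == 1.
  by rewrite -(mulfI z0 (_ : z * z ^+ (q-1) = z * 1)) // mulr1 -exprS; have -> : (q - 1).+1 = q by nia.
rewrite -(prim_order_dvd pz) => /dvdn_leq; rewrite /N; nia.
Qed.
End FF.
Section Form.
Variables (F : finFieldType) (L : fieldExtType F) (q : nat) (s : L -> L -> F).
Hypothesis sq : sesquilinear q s.
Hypothesis q1 : (1 < q)%N.
Hypothesis fD : forall x y : F, (x + y) ^+ q = x ^+ q + y ^+ q.
Hypothesis fK : forall x : F, x ^+ q ^+ q = x.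

Lemma sL0 w : s 0 w = 0.
Proof.
case: sq => h _ _; have := h (-1) w w w.
by rewrite scaleN1r addNr mulN1r addNr.
Qed.
Lemma sLD u v w : s (u + v) w = s u w + s v w.
Proof. by case: sq => h _ _; rewrite -{1}[u]scale1r h mul1r. Qed.
Lemma sLZ c u w : s (c *: u) w = c * s u w.
Proof. by case: sq => h _ _; rewrite -[c *: u]addr0 h sL0 addr0. Qed.
Lemma sR0 u : s u 0 = 0.
Proof. by case: sq => _ _ h; rewrite -(scale0r 0) h expr0n gtn_eqF ?mul0r //; lia. Qed.
Lemma sRD u v w : s u (v + w) = s u v + s u w.
Proof. by case: sq. Qed.
Lemma sRZ c u v : s u (c *: v) = c ^+ q * s u v.
Proof. by case: sq. Qed.
Lemma sLsum I (r : seq I) (P : pred I) (f : I -> L) w :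
  s (\sum_(i <- r | P i) f i) w = \sum_(i <- r | P i) s (f i) w.
Proof. exact: (big_morph (fun u => s u w) (fun u v => sLD u v w) (sL0 w)). Qed.
Lemma sRsum I (r : seq I) (P : pred I) (f : I -> L) u :
  s u (\sum_(i <- r | P i) f i) = \sum_(i <- r | P i) s u (f i).
Proof. exact: (big_morph (s u) (sRD u) (sR0 u)). Qed.

Lemma f0 : (0 : F) ^+ q = 0.
Proof. by rewrite expr0n gtn_eqF //; lia. Qed.
Lemma fM (x y : F) : (x * y) ^+ q = x ^+ q * y ^+ q.
Proof. exact: exprMn. Qed.
Lemma fsum I (r : seq I) (P : pred I) (f : I -> F) :
  (\sum_(i <- r | P i) f i) ^+ q = \sum_(i <- r | P i) f i ^+ q.
Proof. exact: (big_morph (fun x : F => x ^+ q) fD f0). Qed.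
Lemma fI (x : F) : x ^+ q = 0 -> x = 0.
Proof. by move/eqP; rewrite expf_eq0 => /andP[_ /eqP]. Qed.
Lemma fN (x : F) : (- x) ^+ q = - x ^+ q.
Proof. by apply/eqP; rewrite -addr_eq0 -fD addNr f0. Qed.
Lemma fB (x y : F) : (x - y) ^+ q = x ^+ q - y ^+ q.
Proof. by rewrite fD fN. Qed.
Lemma fV (x : F) : (x ^-1) ^+ q = (x ^+ q)^-1.
Proof. exact: exprVn. Qed.

Lemma span_ind (P : L -> Prop) (X : seq L) v :
  P 0 -> (forall a u w, P u -> P w -> P (a *: u + w)) ->
  (forall u, u \in X -> P u) -> v \in <<X>>%VS -> P v.
Proof.
move=> P0 Pl PX vX; rewrite (@coord_span _ _ _ (in_tuple X) v vX).
elim/big_rec: _ => // i x _ Px; apply: Pl => //; apply: PX.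
by rewrite mem_nth.
Qed.

Definition rr y := srad s y /\ srad (sstar q s) y.
Definition eig (l : F) u := forall y, s y u ^+ q = l * s u y.

Lemma rrL y v : rr y -> s y v = 0.
Proof. by case=> h _; apply: h. Qed.
Lemma rrR y v : rr y -> s v y = 0.
Proof. by case=> _ h; apply: fI; apply: h. Qed.

Lemma eig_lin l a u w : eig l u -> eig l w -> eig l (a *: u + w).
Proof.
move=> hu hw y; rewrite sRD sRZ fD fM fK hu hw sLD sLZ.
by rewrite mulrDr mulrA mulrA [a * l]mulrC.
Qed.
Lemma eig_span l X v : (forall u, u \in X -> eig l u) -> v \in <<X>>%VS -> eig l v.
Proof.
move=> h; apply: (span_ind (P := eig l)) => //; last by move=> a u w; apply: eig_lin.
by move=> y; rewrite sR0 sL0 f0 mulr0.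
Qed.

Lemma eig_orth l m u v : m ^+ q * m = 1 -> l != m -> eig l u -> eig m v -> s u v = 0.
Proof.
move=> mq lm hu hv.
have e : s u v = m ^+ q * l * s u v by rewrite -{1}(fK (s u v)) hv fM hu mulrA.
have : (1 - m ^+ q * l) * s u v = 0 by rewrite mulrBl mul1r -e subrr.
move/eqP; rewrite mulf_eq0 => /orP[|/eqP //].
rewrite subr_eq0 => /eqP ml; case/eqP: lm.
by rewrite -[RHS]mulr1 ml mulrA [m * _]mulrC mq mul1r.
Qed.

Definition orthl (xs : seq L) (ds : seq F) :=
  size xs = size ds /\
  forall i j, (i < size xs)%N -> (j < size xs)%N ->
    s xs`_i xs`_j = if i == j then ds`_i else 0.

Lemma orth_sum xs ds (k : 'I_(size xs) -> F) (j : 'I_(size xs)) : orthl xs ds ->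
  s (\sum_(i < size xs) k i *: xs`_i) xs`_j = k j * ds`_j.
Proof.
case=> _ o; rewrite sLsum (bigD1 j) //= sLZ o // eqxx big1 ?addr0 // => i ij.
rewrite sLZ o //; case: eqP => [/val_inj e|]; last by rewrite mulr0.
by rewrite e eqxx in ij.
Qed.

Lemma nz_nth (ds : seq F) j : all (fun d => d != 0) ds -> (j < size ds)%N -> ds`_j != 0.
Proof. by move/allP => h jd; apply: h; rewrite mem_nth. Qed.

Lemma orth_span0 xs ds v : orthl xs ds -> all (fun d => d != 0) ds ->
  v \in <<xs>>%VS -> (forall j, (j < size xs)%N -> s v xs`_j = 0) -> v = 0.
Proof.
move=> o nz vX h; have ev := @coord_span _ _ _ (in_tuple xs) v vX.
rewrite {1}ev; apply: big1 => i _.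
have := h i (ltn_ord i); rewrite {1}ev (orth_sum _ i o) /= => /eqP.
rewrite mulf_eq0 => /orP[/eqP -> | ]; first by rewrite scale0r.
by case: o => e _; rewrite (negbTE (nz_nth nz _)) // -e.
Qed.

Lemma orth_free xs ds : orthl xs ds -> all (fun d => d != 0) ds -> free xs.
Proof.
move=> o nz; rewrite -[xs]/(tval (in_tuple xs)); apply/freeP => k k0 i.
have := orth_sum k i o; rewrite /= k0 sL0 => /esym/eqP; rewrite mulf_eq0.
by case: o => e _; rewrite (negbTE (nz_nth nz _)) ?orbF -?e // => /eqP.
Qed.

Lemma sLN u w : s (- u) w = - s u w.
Proof. by rewrite -scaleN1r sLZ mulN1r. Qed.
Lemma sLB u v w : s (u - v) w = s u w - s v w.
Proof. by rewrite sLD sLN. Qed.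
Lemma sRN u w : s u (- w) = - s u w.
Proof. by rewrite -scaleN1r sRZ fN expr1n mulN1r. Qed.
Lemma sRB u v w : s u (v - w) = s u v - s u w.
Proof. by rewrite sRD sRN. Qed.

Lemma lam_unit (d : F) : d != 0 -> (d ^+ (q - 1)) ^+ q * d ^+ (q - 1) = 1.
Proof.
move=> d0; apply: (mulfI d0); rewrite mulr1 -exprM -exprD -exprS.
have -> : ((q - 1) * q + (q - 1)).+1 = (q * q)%N by nia.
by rewrite exprM fK.
Qed.

Lemma span_R u X v : (forall x, x \in X -> s u x = 0) -> v \in <<X>>%VS -> s u v = 0.
Proof.
move=> h; apply: (span_ind (P := fun v => s u v = 0)) => //; first exact: sR0.
by move=> a x w hx hw; rewrite sRD sRZ hx hw mulr0 addr0.
Qed.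
Lemma span_L u X v : (forall x, x \in X -> s x u = 0) -> v \in <<X>>%VS -> s v u = 0.
Proof.
move=> h; apply: (span_ind (P := fun v => s v u = 0)) => //; first exact: sL0.
by move=> a x w hx hw; rewrite sLD sLZ hx hw mulr0 addr0.
Qed.
Lemma span_rr X v : (forall x, x \in X -> rr x) -> v \in <<X>>%VS -> rr v.
Proof.
move=> h vX; split=> y.
  by apply: (span_L (X := X)) => // x /h /rrL.
by rewrite /sstar (span_R (X := X)) ?f0 // => x /h /rrR.
Qed.

Lemma sum_delta (r : seq nat) (f g : nat -> F) l : uniq r -> l \in r ->
  \sum_(i <- r) f i * (if i == l then g i else 0) = f l * g l.
Proof.
move=> ur lr; rewrite (bigD1_seq l) //= eqxx big1 ?addr0 // => i /negbTE ->.
by rewrite mulr0.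
Qed.

Lemma orth_mem X Ds x y : orthl X Ds -> x \in X -> y \in X -> x != y -> s x y = 0.
Proof.
case=> _ o xX yX xy; rewrite -(nth_index 0 xX) -(nth_index 0 yX) o ?index_mem //.
case: eqP => // e; case/eqP: xy.
by rewrite -(nth_index 0 xX) -(nth_index 0 yX) e.
Qed.

Lemma orth_sub X Ds Y : orthl X Ds -> uniq Y -> {subset Y <= X} ->
  orthl Y [seq s x x | x <- Y].
Proof.
move=> o uY sub; split; first by rewrite size_map.
move=> i j hi hj; case: eqP => [<-|/eqP ij]; first by rewrite (nth_map 0).
apply: (orth_mem o); try apply: sub; try apply: mem_nth => //.
by rewrite nth_uniq.
Qed.

Lemma orth_perm ws dZ d : orthl ws dZ -> perm_eq dZ d ->
  exists ws', orthl ws' d /\ {subset ws' <= ws}.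
Proof.
case=> sw o; rewrite perm_sym => /(perm_iotaP 0) [Is pI ->].
have uI : uniq Is by rewrite (perm_uniq pI) iota_uniq.
have mI i : i \in Is -> (i < size ws)%N by rewrite (perm_mem pI) mem_iota sw.
exists (map (nth 0 ws) Is); split; last first.
  by move=> x /mapP [i /mI hi ->]; apply: mem_nth.
split; first by rewrite !size_map.
move=> i j; rewrite size_map => hi hj.
rewrite !(nth_map 0%N) // o ?mI ?mem_nth // nth_uniq //.
Qed.

Lemma orth_sumR xs ds (k : 'I_(size xs) -> F) (j : 'I_(size xs)) : orthl xs ds ->
  s xs`_j (\sum_(i < size xs) k i *: xs`_i) = k j ^+ q * ds`_j.
Proof.
case=> _ o; rewrite sRsum (bigD1 j) //= sRZ o // eqxx big1 ?addr0 // => i ij.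
rewrite sRZ o //; case: eqP => [/val_inj e|]; last by rewrite mulr0.
by rewrite e eqxx in ij.
Qed.

Lemma rr_shift a b r r' : rr r -> rr r' -> s (a - r) (b - r') = s a b.
Proof.
move=> hr hr'; have h1 v : s r v = 0 by apply: rrL.
have h2 v : s v r' = 0 by apply: rrR.
by rewrite sLB !sRB !h1 !h2 !subr0.
Qed.

Lemma filt N (bt : N.-tuple L) :
  [seq coefmx s bt i i | i <- enum 'I_N & coefmx s bt i i != 0] =
  [seq s x x | x <- bt & s x x != 0].
Proof.
rewrite (eq_filter (a2 := preim (tnth bt) (fun x => s x x != 0))); last first.
  by move=> i; rewrite /= mxE.
rewrite (eq_map (g := (fun x => s x x) \o tnth bt)); last by move=> i; rewrite /= mxE.
by rewrite map_comp -filter_map map_tnth_enum.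
Qed.

Section Mat.
Variables (k : nat) (b : k.-tuple L).
Local Notation C := (coefmx s b).
Definition vec r (A : 'M[F]_(r, k)) i := \sum_l A i l *: b`_l.

Lemma coefE i j : C i j = s b`_i b`_j.
Proof. by rewrite mxE !(tnth_nth 0). Qed.

Lemma LC r (A : 'M[F]_(r, k)) i m : (A *m C) i m = s (vec A i) b`_m.
Proof.
rewrite mxE /vec sLsum; apply: eq_bigr => l _; by rewrite sLZ coefE.
Qed.

Lemma LCs r (A : 'M[F]_(r, k)) i m : (A *m mx_star q C) i m = s b`_m (vec A i) ^+ q.
Proof.
rewrite mxE /vec sRsum fsum; apply: eq_bigr => l _.
by rewrite sRZ fM fK /mx_star !mxE !(tnth_nth 0).
Qed.

Lemma LCC r (A B : 'M[F]_(r, k)) i j :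
  (A *m C *m map_mx (fun x => x ^+ q) B^T) i j = s (vec A i) (vec B j).
Proof.
rewrite mxE /vec sRsum; apply: eq_bigr => m _.
by rewrite LC sRZ !mxE mulrC.
Qed.

Lemma LCsC r (A B : 'M[F]_(r, k)) i j :
  (A *m mx_star q C *m map_mx (fun x => x ^+ q) B^T) i j = s (vec B j) (vec A i) ^+ q.
Proof.
rewrite mxE /vec sLsum fsum; apply: eq_bigr => m _.
by rewrite LCs sLZ fM !mxE mulrC.
Qed.
End Mat.

Lemma diag_orth N (bt : N.-tuple L) : (forall i j : 'I_N, i != j -> coefmx s bt i j = 0) ->
  orthl bt [seq s x x | x <- bt].
Proof.
move=> h; split; first by rewrite size_map.
move=> i j hi hj; case: eqP => [<-|/eqP ij]; first by rewrite (nth_map 0).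
rewrite size_tuple in hi hj.
have := h (Ordinal hi) (Ordinal hj) ij; by rewrite mxE !(tnth_nth 0).
Qed.

Lemma dir1a (d : seq F) : has_diag_coefmx s d -> forall u, srad s u <-> srad (sstar q s) u.
Proof.
case=> bt [hbt hdiag _] u.
have o : orthl (in_tuple bt) [seq s x x | x <- bt] := diag_orth hdiag.
have uF : u \in <<in_tuple bt>>%VS by rewrite /= (span_basis hbt) memvf.
have eu := @coord_span _ _ _ (in_tuple bt) u uF.
have hsb : forall x, x \in (in_tuple bt) -> exists j : 'I_(size (in_tuple bt)), x = (in_tuple bt)`_j.
  by move=> x /(nthP 0) [j hj <-]; exists (Ordinal hj).
have sF : forall v, v \in <<in_tuple bt>>%VS by move=> v; rewrite /= (span_basis hbt) memvf.
split => h.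
- move=> v; rewrite /sstar; suff -> : s v u = 0 by rewrite f0.
  apply: (span_L (X := in_tuple bt)); last exact: sF.
  move=> x /hsb [j ->]; rewrite eu (orth_sumR _ _ o).
  have := h (in_tuple bt)`_j; rewrite {1}eu (orth_sum _ _ o) => /eqP.
  by rewrite mulf_eq0 => /orP [/eqP ->|/eqP ->]; rewrite ?expr0n ?gtn_eqF ?mul0r ?mulr0 //; lia.
- move=> v; apply: (span_R (X := in_tuple bt)); last exact: sF.
  move=> x /hsb [j ->]; rewrite eu (orth_sum _ _ o).
  have := h (in_tuple bt)`_j; rewrite /sstar => /fI; rewrite {1}eu (orth_sumR _ _ o) => /eqP.
  by rewrite mulf_eq0 => /orP [/eqP /fI ->|/eqP ->]; rewrite ?mul0r ?mulr0.
Qed.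

Section WW.
Variable W : {vspace L}.
Hypothesis hred : reduced_domain q s W.

Lemma decomp x : exists w r, [/\ w \in W, rr r & x = w + r].
Proof. by case: hred => h _; have [w [r [? ? ? ?]]] := h x; exists w, r. Qed.

Lemma sradW u : (forall w, w \in W -> s u w = 0) -> srad s u.
Proof.
move=> h y; have [w [r [wW rrr ->]]] := decomp y.
by rewrite sRD h // (rrR _ rrr) addr0.
Qed.
Lemma sradsW u : (forall w, w \in W -> s w u = 0) -> srad (sstar q s) u.
Proof.
move=> h y; have [w [r [wW rrr ->]]] := decomp y.
by rewrite /sstar sLD h // (rrL _ rrr) addr0 f0.
Qed.
Lemma W_rr0 u : u \in W -> rr u -> u = 0.
Proof. by case: hred => _ h wW [h1 h2]; apply: h. Qed.

Lemma decomp_seq (xs : seq L) : exists ws : seq L, size ws = size xs /\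
  forall i, (i < size xs)%N -> ws`_i \in W /\ rr (xs`_i - ws`_i).
Proof.
elim: xs => [|x xs [ws [e h]]]; first by exists [::].
have [w [r [wW rrr ->]]] := decomp x.
exists (w :: ws); split; first by rewrite /= e.
case=> [|i] /=; first by rewrite addrC addKr.
exact: h.
Qed.

Hypothesis radeq : forall u, srad s u <-> srad (sstar q s) u.

Lemma W_rad0 u : u \in W -> srad s u -> u = 0.
Proof. by move=> uW h; apply: W_rr0 => //; split => //; apply/radeq. Qed.

Hypothesis hnorm : forall t : F, t != 0 -> t ^+ (q - 1) = 1 -> exists c : F, c ^+ q * c = t.
Hypothesis hnonfix : exists a : F, a ^+ q != a.

Lemma polar (V : {vspace L}) : (forall w, w \in V -> s w w = 0) ->
  forall v v', v \in V -> v' \in V -> s v v' = 0.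
Proof.
move=> h v v' vV v'V; have [a aq] := hnonfix.
have h1 := h (v + v') (memvD vV v'V).
have h2 := h (v + a *: v') (memvD vV (memvZ a v'V)).
move: h1 h2; rewrite !sLD !sRD !sLZ !sRZ (h v) // (h v') // !mulr0 !addr0 !add0r.
move=> /eqP; rewrite addr_eq0 => /eqP e.
rewrite e mulrN addrC -mulrBl => /eqP.
by rewrite mulf_eq0 subr_eq0 eq_sym (negbTE aq) => /eqP ->; rewrite oppr0.
Qed.

Lemma gs (us : seq L) (ds : seq F) :
  size us = size ds -> free us -> (<<us>> = W)%VS -> all (fun d => d != 0) ds ->
  (forall j, (j < size ds)%N -> eig (ds`_j ^+ (q - 1)) us`_j) ->
  exists xs, orthl xs ds /\ (forall x, x \in xs -> x \in W).
Proof.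
move=> sz fr spW nz heig.
set n := size ds.
pose lam i := ds`_i ^+ (q - 1).
pose E m := <<[seq us`_j | j <- iota 0 n & lam j == m]>>%VS.
have lamU i : (i < n)%N -> lam i ^+ q * lam i = 1.
  by move=> hi; apply: lam_unit; apply: nz_nth.
have lam0 i : (i < n)%N -> lam i != 0 by move=> hi; rewrite expf_neq0 // nz_nth.
have EW m : (E m <= W)%VS.
  apply/span_subvP => x /mapP [j]; rewrite mem_filter mem_iota add0n.
  move=> /andP [_ /andP [_ hj]] ->; rewrite -spW; apply: memv_span.
  by apply: mem_nth; rewrite sz.
have Eeig m v : v \in E m -> eig m v.
  apply: eig_span => x /mapP [j]; rewrite mem_filter mem_iota add0n.
  by move=> /andP [/eqP <- /andP [_ hj]] ->; exact: heig.
have dimE m : \dim (E m) = count (fun j => lam j == m) (iota 0 n).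
  have : free [seq us`_j | j <- iota 0 n & lam j == m].
    have pe : perm_eq us ([seq us`_j | j <- iota 0 n & lam j == m] ++
                          [seq us`_j | j <- iota 0 n & predC (fun j => lam j == m) j]).
      rewrite -map_cat.
      have {1}-> : us = map (nth 0 us) (iota 0 n) by rewrite /n -sz -/(mkseq _ _) mkseq_nth.
      by apply: perm_map; rewrite perm_sym perm_filterC.
    by move: fr; rewrite (perm_free pe) => /catl_free.
  by move/eqnP => ->; rewrite size_map size_filter.
suff: forall t, (t <= n)%N -> exists xs, [/\ size xs = t, orthl xs (take t ds) &
          forall i, (i < t)%N -> xs`_i \in E (lam i)].
  move/(_ n (leqnn n)) => [xs [sx o hE]]; exists xs; split.
    by move: o; rewrite /n take_size.
  move=> x /(nthP 0) [i hi <-]; apply: (subvP (EW (lam i))); apply: hE.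
  by rewrite -sx.
elim=> [_|t IH ht]; first by exists [::]; split => //; split => [|i j] //; rewrite take0.
have [xs [sx [_ o] hE]] := IH (ltnW ht).
have o' : forall i j, (i < t)%N -> (j < t)%N ->
    s xs`_i xs`_j = if i == j then ds`_i else 0.
  by move=> i j hi hj; rewrite o ?sx // nth_take.
set m := lam t.
pose I := [seq i <- iota 0 t | lam i == m].
have uI : uniq I by rewrite filter_uniq // iota_uniq.
have memI i : (i \in I) = (lam i == m) && (i < t)%N by rewrite mem_filter mem_iota.
pose z j := us`_j - \sum_(i <- I) (s us`_j xs`_i / ds`_i) *: xs`_i.
pose Zs := [seq z j | j <- iota 0 n & lam j == m].
have z1 j l : l \in I -> s (z j) xs`_l = 0.
  move=> lI; have := lI; rewrite memI => /andP [_ hl].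
  rewrite /z sLB sLsum.
  rewrite (eq_big_seq (fun i => (s us`_j xs`_i / ds`_i) * (if i == l then ds`_i else 0))).
    by rewrite sum_delta // divfK ?subrr // nz_nth //; apply: leq_trans ht; apply: ltnW.
  move=> i; rewrite memI => /andP [_ hi]; by rewrite sLZ o'.
have z2 j : (j < n)%N -> lam j == m -> z j \in E m.
  move=> hj hjm; rewrite /z; apply: memvB.
    by apply: memv_span; apply/mapP; exists j => //; rewrite mem_filter hjm mem_iota.
  rewrite big_seq; apply: memv_suml => i iI; apply: memvZ.
  by have := iI; rewrite memI => /andP [/eqP <- hi]; exact: hE.
have ZE : (<<Zs>> <= E m)%VS.
  apply/span_subvP => x /mapP [j]; rewrite mem_filter mem_iota add0n.
  by move=> /andP [hjm /andP [_ hj]] ->; exact: z2.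
have z0ex : has (fun x => x != 0) Zs.
  apply/negPn/negP => /hasPn allz.
  have sub : (E m <= <<[seq xs`_i | i <- I]>>)%VS.
    apply/span_subvP => x /mapP [j]; rewrite mem_filter mem_iota add0n.
    move=> /andP [hjm /andP [_ hj]] ->.
    have : z j == 0.
      by apply/negPn; apply: allz; apply/mapP; exists j => //; rewrite mem_filter hjm mem_iota.
    rewrite /z subr_eq0 => /eqP ->.
    rewrite big_seq; apply: memv_suml => i iI; apply: memvZ; apply: memv_span.
    exact: map_f.
  have := dimvS sub; rewrite dimE => /leq_trans /(_ (dim_span _)).
  rewrite size_map size_filter.
  have -> : n = (t + (1 + (n - t.+1)))%N by lia.
  rewrite iotaD iotaD !count_cat /= add0n eqxx /=.
  lia.
move/hasP: z0ex => [z0 z0Z z0nz].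
have z0E : z0 \in E m := subvP ZE _ (memv_span z0Z).
have [w [wZ ww]] : exists w, w \in <<Zs>>%VS /\ s w w != 0.
  apply: Classical_Prop.NNPP => hn.
  have hz : forall w, w \in <<Zs>>%VS -> s w w = 0.
    by move=> w wZ; case: (eqVneq (s w w) 0) => // hw; case: hn; exists w.
  have pol := polar hz.
  case/negP: z0nz; apply/eqP; apply: W_rad0; first exact: (subvP (EW m) _ z0E).
  apply: sradW => w wW; rewrite -spW in wW.
  apply: (span_R (X := us)) => // x /(nthP 0) [j hj <-].
  rewrite sz in hj.
  case: (eqVneq (lam j) m) => hjm.
    have -> : us`_j = z j + \sum_(i <- I) (s us`_j xs`_i / ds`_i) *: xs`_i.
      by rewrite /z subrK.
    have zjZ : z j \in Zs by apply/mapP; exists j => //; rewrite mem_filter hjm eqxx mem_iota add0n hj.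
    rewrite sRD sRsum (pol z0 (z j)) ?memv_span // add0r.
    apply: big1_seq => i iI; rewrite sRZ.
    by move: z0Z => /mapP [j' _ ->]; rewrite z1 // mulr0.
  apply: (eig_orth (l := m) (m := lam j)) => //.
  - exact: lamU.
  - by rewrite eq_sym.
  - exact: Eeig.
  - exact: heig.
have wE : w \in E m := subvP ZE _ wZ.
have wI : forall l, l \in I -> s w xs`_l = 0.
  move=> l lI; apply: (span_L (X := Zs)) => // x /mapP [j _ ->]; exact: z1.
set e := s w w.
have eq : e ^+ q = m * e by rewrite /e (Eeig m w wE).
have eq1 : e ^+ (q - 1) = m.
  apply: (mulIf ww); rewrite -exprSr (_ : (q - 1).+1 = q) ?eq //; lia.
have dt0 : ds`_t != 0 := nz_nth nz ht.
have : (ds`_t / e) ^+ (q - 1) = 1.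
  by rewrite exprMn exprVn eq1; apply: divff; exact: (lam0 t ht).
case/(hnorm (mulf_neq0 dt0 (invr_neq0 ww))) => c hc.
pose x := c *: w.
have xx : s x x = ds`_t by rewrite /x sLZ sRZ mulrA [c * _]mulrC hc divfK.
have xE : x \in E m by apply: memvZ.
have xl : forall l, (l < t)%N -> s x xs`_l = 0.
  move=> l hl; rewrite /x sLZ.
  case: (eqVneq (lam l) m) => hlm.
    by rewrite wI ?mulr0 // memI hlm eqxx hl.
  rewrite (eig_orth (l := m) (m := lam l)) ?mulr0 //.
  - by apply: lamU; apply: leq_trans ht; apply: ltnW.
  - by rewrite eq_sym.
  - exact: Eeig.
  - by apply: Eeig; apply: hE.
have lx : forall l, (l < t)%N -> s xs`_l x = 0.
  by move=> l hl; apply: fI; rewrite (Eeig m x xE) xl // mulr0.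
exists (rcons xs x); split.
- by rewrite size_rcons sx.
- split; first by rewrite size_rcons size_takel ?sx.
  move=> i j; rewrite size_rcons sx !ltnS => hi hj.
  rewrite !nth_rcons sx nth_take; last by rewrite ltnS.
  have [hit|hit] := ltnP i t; have [hjt|hjt] := ltnP j t.
  + exact: o'.
  + have ej : j = t by apply/eqP; rewrite eqn_leq hj hjt.
    by rewrite ej eqxx lx // ltn_eqF.
  + have ei : i = t by apply/eqP; rewrite eqn_leq hi hit.
    by rewrite ei eqxx xl // gtn_eqF.
  + have ei : i = t by apply/eqP; rewrite eqn_leq hi hit.
    have ej : j = t by apply/eqP; rewrite eqn_leq hj hjt.
    by rewrite ei ej eqxx.
- move=> i; rewrite ltnS nth_rcons sx => hi.
  case: ltnP => hit; first exact: hE.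
  have ei : i = t by apply/eqP; rewrite eqn_leq hi hit.
  by rewrite ei eqxx.
Qed.

Variables (k : nat) (b : k.-tuple L).
Hypothesis hb : basis_of W b.

Lemma b_mem l : (l < k)%N -> b`_l \in W.
Proof. by move=> hl; rewrite -(span_basis hb); apply: memv_span; apply: mem_nth; rewrite size_tuple. Qed.

Lemma vec_mem r (A : 'M[F]_(r, k)) i : vec b A i \in W.
Proof. by apply: memv_suml => l _; apply: memvZ; apply: b_mem. Qed.

Lemma Cunit : coefmx s b \in unitmx.
Proof.
apply/negPn/negP => nu.
have : \det (coefmx s b) == 0 by move: nu; rewrite unitmxE unitfE negbK.
case/det0P => v vn0 vC.
have wb (m : 'I_k) : s (vec b v 0) b`_m = 0 by rewrite -LC vC mxE.
have sw : srad s (vec b v 0).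
  apply: sradW => y; rewrite -(span_basis hb) => yW.
  apply: (span_R (X := b)) yW => x /(nthP 0) [m hm <-].
  rewrite size_tuple in hm; exact: (wb (Ordinal hm)).
have w0 := W_rad0 (vec_mem v 0) sw.
case/negP: vn0; apply/eqP/rowP => l; rewrite mxE.
by move/freeP: (basis_free hb) => /(_ (fun l => v 0 l)); apply.
Qed.

Lemma eig_W l u : (forall m, (m < k)%N -> s b`_m u ^+ q = l * s u b`_m) -> eig l u.
Proof.
move=> h y; have [w [r [wW rrr ->]]] := decomp y.
rewrite sLD sRD (rrL _ rrr) (@rrR r u rrr) addr0 addr0.
rewrite -(span_basis hb) in wW.
apply: (span_ind (P := fun w => s w u ^+ q = l * s u w)) wW.
- by rewrite sL0 sR0 f0 mulr0.
- move=> a x z hx hz; rewrite sLD sLZ sRD sRZ fD fM hx hz.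
  by rewrite mulrDr mulrA mulrA [_ * l]mulrC.
- by move=> x /(nthP 0) [m hm <-]; apply: h; rewrite size_tuple in hm.
Qed.

Lemma vec_free (Q : 'M[F]_k) (P : 'M[F]_k) : Q *m P = 1%:M -> free [tuple vec b Q i | i < k].
Proof.
move=> QP; apply/freeP => kk h i.
have tE (j : 'I_k) : [tuple vec b Q i | i < k]`_j = vec b Q j.
  by rewrite -tnth_nth tnth_mktuple.
have h' : \sum_(j < k) kk j *: vec b Q j = 0.
  by rewrite -[X in _ = X]h; apply: eq_bigr => j _; rewrite tE.
have e : \sum_(l < k) (\sum_(i < k) kk i * Q i l) *: b`_l = 0.
  rewrite -[X in _ = X]h'; symmetry; rewrite /vec; under eq_bigr => j _ do rewrite scaler_sumr.
  rewrite exchange_big /=; apply: eq_bigr => l _; rewrite scaler_suml.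
  by apply: eq_bigr => j _; rewrite scalerA.
move/freeP: (basis_free hb) => /(_ _ e) hl.
pose rv := \row_i kk i.
have rQ : rv *m Q = 0 by apply/rowP => l; rewrite !mxE -[RHS](hl l); apply: eq_bigr => j _; rewrite mxE.
have : rv = 0 by rewrite -[rv]mulmx1 -QP mulmxA rQ mul0mx.
by move/rowP/(_ i); rewrite !mxE.
Qed.

Lemma us_nth (Q : 'M[F]_k) (i : 'I_k) : [tuple vec b Q i | i < k]`_i = vec b Q i.
Proof. by rewrite -tnth_nth tnth_mktuple. Qed.

Lemma dir2 (d : seq F) (P Q : 'M[F]_k) : size d = k ->
  P *m Q = 1%:M -> Q *m P = 1%:M ->
  mx_star q (coefmx s b) *m invmx (coefmx s b) =
    P *m diag_mx (\row_(i < k) d`_i ^+ (q - 1)) *m Q ->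
  has_diag_coefmx s d.
Proof.
set C := coefmx s b; set Dl := diag_mx _.
move=> sd PQ QP hM.
have Cu : C \in unitmx := Cunit.
have QCs : Q *m mx_star q C = Dl *m (Q *m C).
  have : Q *m (mx_star q C *m invmx C) *m C = Dl *m Q *m C.
    by rewrite hM !mulmxA QP mul1mx.
  by rewrite mulmxA mulmxKV // -mulmxA.
pose us := [tuple vec b Q i | i < k].
have heig : forall j, (j < size d)%N -> eig (d`_j ^+ (q - 1)) us`_j.
  move=> j; rewrite sd => hj; rewrite (us_nth Q (Ordinal hj)).
  apply: eig_W => m hm.
  have := congr1 (fun M : 'M[F]_k => M (Ordinal hj) (Ordinal hm)) QCs.
  by rewrite LCs mul_diag_mx mxE LC mxE.
have fr : free us := vec_free QP.
have usW : forall x, x \in us -> x \in W.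
  by move=> x /(nthP 0) [j hj <-]; rewrite size_tuple in hj; rewrite (us_nth Q (Ordinal hj)) vec_mem.
have spW : (<<us>> = W)%VS.
  apply: span_basis; rewrite basisEfree fr (size_basis hb) size_tuple leqnn andbT.
  by apply/span_subvP.
have nz : all (fun x => x != 0) d.
  apply/allP => x /(nthP 0) [j hj <-]; apply/negP => /eqP dj0.
  have e0 := heig j hj; rewrite dj0 expr0n (_ : (q - 1 == 0)%N = false) in e0; last by lia.
  have hs : srad (sstar q s) us`_j by move=> y; rewrite /sstar e0 mul0r.
  have u0 : us`_j = 0.
    apply: W_rad0; first by apply: usW; apply: mem_nth; rewrite size_tuple -sd.
    exact/radeq.
  have jl : (j < size us)%N by rewrite size_tuple -sd.
  by have := free_not0 fr (mem_nth 0 jl); rewrite u0 eqxx.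
have [xs [oxs xsW]] := gs (etrans (size_tuple us) (esym sd)) fr spW nz heig.
have frx : free xs := orth_free oxs nz.
have spx : (<<xs>> = W)%VS.
  apply: span_basis; rewrite basisEfree frx (size_basis hb) oxs.1 sd leqnn andbT.
  by apply/span_subvP.
pose e := vbasis (fullv : {vspace L}).
have [ws [sw hws]] := decomp_seq e.
pose rs := [seq e`_i - ws`_i | i <- iota 0 (size e)].
pose V := vbasis <<rs>>%VS.
pose B := xs ++ V.
have spV : (<<V>> = <<rs>>)%VS := span_basis (vbasisP _).
have rrV : forall v, v \in <<V>>%VS -> rr v.
  move=> v; rewrite spV; apply: span_rr => x /mapP [i].
  by rewrite mem_iota add0n => /andP [_ /hws [_ ?]] ->.
have freeB : free B.
  rewrite cat_free frx (basis_free (vbasisP _)) /=; apply/directv_addP.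
  apply/eqP; rewrite -subv0; apply/subvP => v /memv_capP [vx vV].
  rewrite memv0; apply/eqP; apply: W_rr0; first by rewrite -spx.
  exact: rrV.
have fullB : (fullv <= <<B>>)%VS.
  rewrite -(span_basis (vbasisP fullv)); apply/span_subvP => x /(nthP 0) [i hi <-].
  have [wi ri] := hws i hi.
  have -> : e`_i = ws`_i + (e`_i - ws`_i) by rewrite addrC subrK.
  rewrite span_cat; apply: memvD; first by apply: (subvP (addvSl _ _)); rewrite spx.
  apply: (subvP (addvSr _ _)); rewrite spV; apply: memv_span; apply/mapP.
  by exists i; rewrite // mem_iota add0n.
have szB : size B == \dim (fullv : {vspace L}).
  apply/eqP; rewrite -(eqnP freeB); apply/eqP; rewrite eqn_leq (dimvS fullB) andbT.
  exact: dimvS (subvf _).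
have basisB : basis_of fullv B.
  by rewrite basisEfree freeB subvf (eqP szB) leqnn.
have offB : forall i j, (i < size B)%N -> (j < size B)%N -> i != j -> s B`_i B`_j = 0.
  move=> i j hi hj ij; rewrite /B !nth_cat.
  have [hix|hix] := ltnP i (size xs); have [hjx|hjx] := ltnP j (size xs).
  + by rewrite oxs.2 // (negbTE ij).
  + apply: rrR; apply: rrV; apply: memv_span; apply: mem_nth.
    move: hj hjx; rewrite /B size_cat; move: (size xs) (size V) => a c; lia.
  + apply: rrL; apply: rrV; apply: memv_span; apply: mem_nth.
    move: hi hix; rewrite /B size_cat; move: (size xs) (size V) => a c; lia.
  + apply: rrL; apply: rrV; apply: memv_span; apply: mem_nth.
    move: hi hix; rewrite /B size_cat; move: (size xs) (size V) => a c; lia.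
exists (Tuple szB); split => //.
  move=> i j ij; rewrite mxE !(tnth_nth 0) /=; apply: offB.
  - by rewrite (eqP szB).
  - by rewrite (eqP szB).
  - exact: ij.
rewrite filt /= /B filter_cat map_cat.
have -> : [seq x <- V | s x x != 0] = [::].
  rewrite (eq_in_filter (a2 := pred0)) ?filter_pred0 // => x xV /=.
  by rewrite (rrL _ (rrV x (memv_span xV))) eqxx.
have xsnz : forall i, (i < size xs)%N -> s xs`_i xs`_i = d`_i.
  by move=> i hi; rewrite oxs.2 // eqxx.
rewrite cats0 (all_filterP _); last first.
  apply/allP => x /(nthP 0) [i hi <-]; rewrite xsnz //; apply: nz_nth => //.
  by rewrite -oxs.1.
have -> : [seq s x x | x <- xs] = d.
  apply: (@eq_from_nth _ 0); first by rewrite size_map oxs.1.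
  by move=> i; rewrite size_map => hi; rewrite (nth_map 0) // xsnz.
exact: perm_refl.
Qed.

Lemma dir1_ws (d : seq F) : has_diag_coefmx s d ->
  exists ws, [/\ orthl ws d, forall x, x \in ws -> x \in W,
                 all (fun x => x != 0) d & (k <= size d)%N].
Proof.
case=> bt [hbt hdiag hperm]; rewrite filt in hperm.
have o := diag_orth hdiag.
have ubt : uniq bt := free_uniq (basis_free hbt).
pose pZ := fun x => s x x != 0.
pose Z := [seq x <- bt | pZ x].
have oZ : orthl Z [seq s x x | x <- Z].
  apply: (orth_sub o); first exact: filter_uniq.
  by move=> x; rewrite mem_filter => /andP [].
have [ws [sw hws]] := decomp_seq Z.
have ows : orthl ws [seq s x x | x <- Z].
  split; first by rewrite size_map sw.
  move=> i j hi hj; rewrite sw in hi hj.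
  have [_ ri] := hws i hi; have [_ rj] := hws j hj.
  have ei : Z`_i - (Z`_i - ws`_i) = ws`_i by rewrite opprB addrC subrK.
  have ej : Z`_j - (Z`_j - ws`_j) = ws`_j by rewrite opprB addrC subrK.
  by rewrite -ei -ej rr_shift // oZ.2.
have dZnz : all (fun x => x != 0) [seq s x x | x <- Z].
  by rewrite all_map; apply: filter_all.
have [ws' [ows' sub]] := orth_perm ows hperm.
have nzd : all (fun x => x != 0) d by rewrite -(perm_all _ hperm).
exists ws'; split => //.
  move=> x /sub /(nthP 0) [i hi <-]; rewrite sw in hi; exact: (hws i hi).1.
pose Y := [seq x <- bt | predC pZ x].
have hY : forall y, y \in Y -> rr y.
  move=> y; rewrite mem_filter => /andP [/negPn /eqP yy ybt].
  have hx : forall x, x \in bt -> s y x = 0 /\ s x y = 0.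
    move=> x xbt; case: (eqVneq x y) => [->|xy]; first by [].
    by rewrite !(orth_mem o) // eq_sym.
  have sF : forall v, v \in <<bt>>%VS by move=> v; rewrite (span_basis hbt) memvf.
  split => v; first by apply: (span_R (X := bt)) => // x /hx [].
  by rewrite /sstar (span_L (X := bt)) ?f0 // => x /hx [].
have fbY : free (b ++ Y).
  rewrite cat_free (basis_free hb) filter_free ?(basis_free hbt) //=.
  apply/directv_addP/eqP; rewrite -subv0; apply/subvP => v /memv_capP [vb vY].
  rewrite memv0; apply/eqP; apply: W_rr0; first by rewrite -(span_basis hb).
  by apply: span_rr vY.
have := dimvS (subvf <<b ++ Y>>%VS); rewrite (eqnP fbY) size_cat size_tuple.
have -> : \dim (fullv : {vspace L}) = size bt by rewrite size_tuple.
rewrite -(count_predC pZ) -!size_filter -/Z -/Y.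
have -> : size Z = size d by rewrite -(size_map (fun x => s x x)) (perm_size hperm).
move: (size Y) => c; lia.
Qed.

Lemma dir1c (d : seq F) (ws : seq L) : size d = k -> orthl ws d ->
  (forall x, x \in ws -> x \in W) -> all (fun x => x != 0) d ->
  mx_conj (mx_star q (coefmx s b) *m invmx (coefmx s b))
          (diag_mx (\row_(i < k) d`_i ^+ (q - 1))).
Proof.
set C := coefmx s b; set Dl := diag_mx _.
move=> sd o wsW nz.
pose A : 'M[F]_k := \matrix_(i, l) coord b l ws`_i.
have hk : forall i : 'I_k, (i < size ws)%N by move=> i; rewrite o.1 sd.
have vA : forall i : 'I_k, vec b A i = ws`_i.
  move=> i; rewrite [RHS](coord_basis hb (wsW _ (mem_nth 0 (hk i)))) /vec.
  by apply: eq_bigr => l _; rewrite mxE.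
pose Aq := map_mx (fun x : F => x ^+ q) A^T.
pose D := diag_mx (\row_(i < k) d`_i).
pose Dq := diag_mx (\row_(i < k) d`_i ^+ q).
have ok : forall i j : 'I_k, s ws`_i ws`_j = if i == j then d`_i else 0.
  by move=> i j; rewrite o.2.
have h1 : A *m C *m Aq = D.
  apply/matrixP => i j; rewrite LCC !vA ok !mxE.
  by case: (eqVneq i j) => [->|ij]; rewrite ?eqxx ?mulr1n // ?mulr0n.
have h2 : A *m mx_star q C *m Aq = Dq.
  apply/matrixP => i j; rewrite LCsC !vA ok !mxE.
  case: (eqVneq i j) => [->|ij]; rewrite ?eqxx ?mulr1n //.
  by rewrite mulr0n f0.
have Du : D \in unitmx.
  rewrite unitmxE det_diag unitfE; apply/prodf_neq0 => i _; rewrite mxE.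
  by apply: nz_nth; rewrite // sd.
have : A *m C *m Aq \in unitmx by rewrite h1.
rewrite !unitmx_mul => /andP [/andP [Au Cu] Aqu].
have DD : Dl *m D = Dq.
  apply/matrixP => i j; rewrite mul_diag_mx !mxE.
  case: (eqVneq i j) => [->|ij]; rewrite ?eqxx ?mulr1n ?mulr0n ?mulr0 //.
  by rewrite -exprSr (_ : (q - 1).+1 = q) //; lia.
exists (invmx A), A; split; [exact: mulVmx | exact: mulmxV | ].
apply: (can_inj (mulmxK Cu)); rewrite mulmxKV //.
have eCs : mx_star q C = invmx A *m Dq *m invmx Aq.
  by rewrite -h2 !mulmxA mulVmx // mul1mx mulmxK.
by rewrite eCs -DD -h1 !mulmxA mulmxK.
Qed.

End WW.
End Form.

Unset Implicit Arguments.
Set Strict Implicit.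

Theorem corollary2p7 (p e q n : nat) (F : finFieldType) (L : fieldExtType F)
    (s : L -> L -> F) (W : {vspace L}) (k : nat) (b : k.-tuple L) (d : seq F) :
  prime p -> (0 < e)%N -> q = (p ^ e)%N -> #|F| = (q ^ 2)%N ->
  (0 < n)%N -> \dim (fullv : {vspace L}) = n ->
  sesquilinear q s ->
  reduced_domain q s W -> basis_of W b ->
  (has_diag_coefmx s d <->
     (forall u, srad s u <-> srad (sstar q s) u) /\
     mx_conj (mx_star q (coefmx s b) *m invmx (coefmx s b))
             (diag_mx (\row_(i < size d) (nth 0 d i) ^+ (q - 1)))).
Proof.
move=> pp e0 qe cardF n0 dimn sq hred hb.
have q1 : (1 < q)%N.
  have : (p ^ 1 <= p ^ e)%N by rewrite leq_exp2l ?prime_gt1.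
  by rewrite expn1 -qe; apply: leq_trans; apply: prime_gt1.
have fK := ffK cardF.
have hnorm := ff_norm q1 cardF.
have hnonfix := ff_nonfix q1 cardF.
have fD : forall x y : F, (x + y) ^+ q = x ^+ q + y ^+ q.
  have pc : p \in [pchar F].
    by apply: (@card_finPcharP _ p (e * 2)%N) => //; rewrite cardF qe -expnM.
  by move=> x y; apply: exprDn_pchar; rewrite qe pnatX pnatE // pc.
split.
- move=> hd.
  have radeq := dir1a sq q1 hd.
  have [ws [ows wsW nz hk]] := dir1_ws sq q1 fD hred hb hd.
  have sd : size d = k.
    apply/eqP; rewrite eqn_leq hk andbT -(size_basis hb) -ows.1.
    rewrite -(eqnP (orth_free sq ows nz)).
    by apply: dimvS; apply/span_subvP.
  split => //; subst k.
  exact: (dir1c sq q1 fD fK hb (erefl _) ows wsW nz).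
- case=> radeq [P [Q [PQ QP hM]]].
  have sd : size d = k.
    apply/eqP; rewrite eqn_leq; apply/andP; split.
      have := mxrankM_maxl Q P; rewrite QP mxrank1 => h.
      exact: leq_trans h (rank_leq_col Q).
    have := mxrankM_maxl P Q; rewrite PQ mxrank1 => h.
    exact: leq_trans h (rank_leq_col P).
  subst k.
  exact: (dir2 sq q1 fD fK hred radeq hnorm hnonfix hb (erefl _) PQ QP hM).
Qed.
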